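(* Let $\mathcal F$ be a class of real-valued functions on a measurable space $\mathcal S$ with $\sup_{f\in\mathcal F}\mathrm{Var}(f(X))\le\sigma^2$ for some $\sigma^2>0$, and let $\hat f=\arg\min_{f\in\mathcal F}\hat\mu_f$ (assumed to exist) and $m^*=\inf_{f\in\mathcal F}m_f$ (assumed attained). There exist constants $C_1,C_2,C_3,C_4>0$ depending only on $\sigma^2$ such that the following holds. Let $\varepsilon\in(0,1)$ and suppose that (i) $\mathscr X=\{m_f-\hat\mu_f: f\in\mathcal F\}$ is an exponential class with $N(\delta)\le C\exp(M\delta^{-p})$ for all $0<\delta\le n$, for some constants $C,M,p>0$, $p\ne2$; and (ii) writing $a=\frac{n^2\varepsilon}{C_2}\wedge\frac n4$, $$\frac{n^{3/2}\varepsilon^2}{C_1}\ \ge\ \Big\{\frac{2\sqrt M}{2-p}\Big(n^{1-\frac p2}-a^{1-\frac p2}\Big)+\sqrt{\log C}\,(n-a)\,\mathbf 1_{\{C>1\}}\Big\}\vee n^{1/2}.$$ Then $$\mathbb P\big(m_{\hat f}-m^*\ge n^2\varepsilon\big)\le C_3\exp\Big(-\frac{n\varepsilon^2}{C_4}\Big).$$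
   Context: $(X_i)_{i=1}^n$ are i.i.d. random variables taking values in $\mathcal S$ (e.g. feature–target pairs $(Z_i,Y_i)$, with $f$ playing the role of a loss $\ell(g(\cdot),\cdot)$), and $X$ is independent of them with the same distribution. For $f\in\mathcal F$, $m_f=\mathbb E f(X)$ (the risk). Let $\phi:\mathbb R\to\mathbb R$ be non-decreasing, differentiable, with $-\log(1-x+x^2/2)\le\phi(x)\le\log(1+x+x^2/2)$. For a parameter $\alpha>0$, Catoni's estimator $\hat\mu_f$ is a value (chosen arbitrarily if not unique) with $\frac{1}{n\alpha}\sum_{i=1}^n\phi(\alpha(f(X_i)-\hat\mu_f))=0$. Standing assumption: for every $f\in\mathcal F$ and $x>0$, $\mathbb P(|m_f-\hat\mu_f|\ge x)\le 2\exp\big(-\frac{nx^2}{2(\sigma^2+x^2)}\big)$. Distance on $\mathscr X$: $d(U,V)=\|U-V\|$, the essential supremum norm on the underlying probability space (assumed finite). Bracketing covering number $N(\delta)$: the smallest $m$ such that there are pairs $[D_j^L,D_j^U]\in\mathscr X\times\mathscr X$, $j=1,\dots,m$, with each $D\in\mathscr X$ satisfying $D_j^L\le D\le D_j^U$ and $d(D_j^L,D_j^U)\le\delta$ for some $j$. $\mathscr X$ is an exponential class if $N(\kappa)\le A\exp(B\kappa^{-r})$ for all $0<\kappa\le n$ for some constants $A,B,r>0$. Probabilities are outer probabilities if needed. *)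

(* Defs.v *)
From HB Require Import structures.
From mathcomp Require Import all_boot all_order all_algebra.
From mathcomp Require Import all_classical all_reals all_analysis ess_sup_inf.
Set Implicit Arguments. Unset Strict Implicit. Unset Printing Implicit Defensive.
Import Order.TTheory GRing.Theory Num.Def Num.Theory.
Import numFieldNormedType.Exports.
Local Open Scope classical_set_scope.
Local Open Scope ring_scope.

Section defs.
Context {R : realType} {dO : measure_display} {Omega : measurableType dO}.
Variable P : probability Omega R.

Definition outerP (A : set Omega) : \bar R :=
  ereal_inf [set P B | B in [set B | measurable B /\ A `<=` B]].

Definition mutually_independent {dS : measure_display} {S : measurableType dS}
  {I : finType} (Y : I -> Omega -> S) : Prop :=
  forall (J : {set I}) (A : I -> set S), (forall i, measurable (A i)) ->
    P (\bigcap_(i in [set j | j \in J]) (Y i @^-1` A i)) =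
    (\prod_(i in J) P (Y i @^-1` A i))%E.

Definition same_distribution {dS : measure_display} {S : measurableType dS}
  (Y Z : Omega -> S) : Prop :=
  forall A : set S, measurable A -> P (Y @^-1` A) = P (Z @^-1` A).

Definition esdist (U V : Omega -> R) : \bar R :=
  ess_sup P (fun w => (`|U w - V w|)%:E).

Definition has_bracketing (Xc : set (Omega -> R)) (delta : R) (k : nat) : Prop :=
  exists L U : nat -> Omega -> R,
    (forall j, (j < k)%N -> [/\ Xc (L j), Xc (U j) & (esdist (L j) (U j) <= delta%:E)%E]) /\
    (forall D, Xc D -> exists j, (j < k)%N /\ forall w, L j w <= D w <= U j w).

(* bracketing covering number N(delta) (= +oo if no finite bracketing) *)
Definition bracketing_number (Xc : set (Omega -> R)) (delta : R) : \bar R :=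
  ereal_inf [set (k%:R)%:E | k in [set k : nat | has_bracketing Xc delta k]].

End defs.

(* Main.v *)
Require Import Defs.
From HB Require Import structures.
From mathcomp Require Import all_boot all_order all_algebra.
From mathcomp Require Import all_classical all_reals all_analysis ess_sup_inf.
From mathcomp Require Import ring lra.
Import Order.TTheory GRing.Theory Num.Def Num.Theory.
Import numFieldNormedType.Exports.
Local Open Scope classical_set_scope.
Local Open Scope ring_scope.
Section outer.
Set Implicit Arguments. Unset Strict Implicit.
Context {R : realType} {dO : measure_display} {Omega : measurableType dO}.
Variable P : probability Omega R.

Lemma outerP_lb (A B : set Omega) : measurable B -> A `<=` B -> (outerP P A <= P B)%E.
Proof. by move=> mB AB; apply: ereal_inf_lbound; exists B. Qed.

Lemma outerP_ex (A : set Omega) (r e : R) : (outerP P A <= r%:E)%E -> 0 < e ->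
  exists B, [/\ measurable B, A `<=` B & (P B <= (r + e)%:E)%E].
Proof.
move=> h e0.
have : (outerP P A < (r + e)%:E)%E.
  by apply: (le_lt_trans h); rewrite lte_fin ltrDl.
move=> /ereal_inf_lt [y [B [mB AB] <-] /ltW yl].
by exists B.
Qed.

Lemma outerP_U (A B : set Omega) (r s : R) : (outerP P A <= r%:E)%E ->
  (outerP P B <= s%:E)%E -> (outerP P (A `|` B) <= (r + s)%:E)%E.
Proof.
move=> hA hB; apply/lee_addgt0Pr => e e0.
have e20 : 0 < e / 2 by rewrite divr_gt0.
have [A' [mA AA PA]] := outerP_ex hA e20.
have [B' [mB BB PB]] := outerP_ex hB e20.
have H1 := outerP_lb (measurableU _ _ mA mB) (setUSS AA BB).
apply: le_trans H1 _.
apply: (le_trans (measureU2 P mA mB)).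
apply: (le_trans (leeD PA PB)).
by rewrite -EFinD lee_fin addrACA -splitr.
Qed.

Lemma outerP_sub (A B : set Omega) : A `<=` B -> (outerP P A <= outerP P B)%E.
Proof.
move=> AB; apply: le_ereal_inf => _ [C [mC BC] <-].
by exists C => //; split => //; exact: subset_trans BC.
Qed.

Lemma outerP_big (G : nat -> set Omega) (r : R) (k : nat) :
  (forall j, (j < k)%N -> (outerP P (G j) <= r%:E)%E) ->
  (outerP P [set w | exists j, (j < k)%N /\ G j w] <= (k%:R * r)%:E)%E.
Proof.
elim: k => [|k IH] h.
  rewrite mul0r; apply: le_trans (outerP_lb measurable0 _) _.
    by move=> w [j []].
  by rewrite measure0.
have -> : [set w | exists j, (j < k.+1)%N /\ G j w] =
   [set w | exists j, (j < k)%N /\ G j w] `|` G k.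
  apply/seteqP; split => w /=.
    move=> [j [jk Gj]]; rewrite ltnS leq_eqVlt in jk.
    case/orP: jk => [/eqP<-|jk]; [by right|by left; exists j].
  by case => [[j [jk Gj]]|Gk]; [exists j; split => //; exact: ltnW | exists k].
rewrite -nat1r mulrDl mul1r addrC.
apply: outerP_U; first by apply: IH => j jk; apply: h; exact: ltnW.
exact: h.
Qed.

Lemma outerP_null (f : Omega -> R) (d : R) :
  (ess_sup P (fun w => (f w)%:E) <= d%:E)%E ->
  (outerP P [set w | (d < f w)%R] <= 0%:E)%E.
Proof.
move=> /ess_supP [N [mN N0 sub]].
apply: le_trans (outerP_lb mN _) _; last by rewrite N0.
move=> w /= dw; apply: sub => /=; rewrite lee_fin; apply/negP; rewrite -ltNge //.
Qed.
End outer.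
Lemma div_le (R : realFieldType) (a b c e : R) :
  0 < b -> 0 < e -> a * e <= c * b -> a / b <= c / e.
Proof. by move=> b0 e0 h; rewrite ler_pdivlMr // mulrAC ler_pdivrMr. Qed.

Lemma final_comb (R : realType) (C W Z ne sg K C1 : R) : 0 < ne -> 0 < sg -> 0 < C1 ->
  0 < C -> 0 <= Z -> 64 * sg * K <= C1 ^+ 2 -> C <= expR (2 * ne / C1 ^+ 2) ->
  W <= (K - 2) * ne / C1 ^+ 2 -> Z <= expR (- ne / (32 * sg)) ->
  C * expR W * Z <= expR (- ne / (64 * sg)).
Proof.
move=> ne0 sg0 C10 C0 Z0 C1ge hA hW hZ.
have eW : expR W <= expR ((K - 2) * ne / C1 ^+ 2) by rewrite ler_expR.
apply: le_trans (_ : expR (2 * ne / C1 ^+ 2) * expR ((K - 2) * ne / C1 ^+ 2)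
                        * expR (- ne / (32 * sg)) <= _).
  apply: ler_pM.
  - by apply: mulr_ge0; [lra| exact: ltW (expR_gt0 _)].
  - exact: Z0.
  - apply: ler_pM; [lra | exact: ltW (expR_gt0 _) | exact: hA | exact: eW].
  - exact: hZ.
rewrite -!expRD ler_expR.
have C1n : C1 != 0 by rewrite gt_eqF.
have : K * ne / C1 ^+ 2 <= ne / (64 * sg).
  apply: div_le; [exact: exprn_gt0 | lra |].
  have := ler_wpM2l (ltW ne0) C1ge; lra.
have -> : 2 * ne / C1 ^+ 2 + (K - 2) * ne / C1 ^+ 2 = K * ne / C1 ^+ 2 by field.
have sgn : sg != 0 by rewrite gt_eqF.
have e1 : - ne / (32 * sg) = - (2 * (ne / (64 * sg))).
  by field.
have e2 : - ne / (64 * sg) = - (ne / (64 * sg)) by rewrite mulNr.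
rewrite e1 e2.
lra.
Qed.

Lemma key_pow (R : realType) (a n q : R) : 0 < a -> 2 * a <= n -> q < 1 -> q != 0 ->
  ln 2 * a * (2 * a) `^ (q - 1) <= (n `^ q - a `^ q) / q.
Proof.
move=> a0 an q1 q0.
have n0 : 0 < n by lra.
have l0 : 0 < ln (2:R) by apply: ln_gt0; lra.
have a20 : 0 < 2 * a by lra.
rewrite /powR !gt_eqF //.
have hn : ln 2 + ln a <= ln n.
  by rewrite -lnM ?posrE // ler_ln ?posrE.
rewrite lnM ?posrE //.
set L := ln a; set l := ln (2:R); set N := ln n.
have ea : a = expR L by rewrite lnK.
have e2 : expR l = 2 by rewrite lnK // posrE; lra.
rewrite {1}ea -mulrA -expRD.
have -> : L + (q - 1) * (l + L) = q * L + (q * l - l) by ring.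
rewrite !expRD expRN e2.
have E0 : 0 < expR (q * L) := expR_gt0 _.
have y0 : 0 < expR (q * l) := expR_gt0 _.
set E := expR (q * L) in E0 *; set y := expR (q * l) in y0 *.
have hyE : expR (q * (l + L)) = y * E by rewrite mulrDr expRD.
have [qp|qn] := ltP 0 q.
  rewrite ler_pdivlMr //.
  have h1 : y * E <= expR (q * N).
    by rewrite -hyE ler_expR ler_pM2l.
  have h2 : 1 + q * l <= y := expR_ge1Dx _.
  have h3 : y <= 2 by rewrite -e2 ler_expR -[X in _ <= X]mul1r ler_pM2r //; exact: ltW.
  have h4 : E * (q * l) <= E * (y - 1) by rewrite ler_pM2l //; lra.
  have h5 : 0 <= E * (q * l) * (2 - y) by apply: mulr_ge0; [apply: mulr_ge0; [exact: ltW | apply: mulr_ge0; exact: ltW] | lra].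
  nra.
have qn' : q < 0 by rewrite lt_neqAle q0 qn.
rewrite ler_ndivlMr //.
have h1 : expR (q * N) <= y * E.
  by rewrite -hyE ler_expR ler_nM2l.
have h2 : 1 + (- (q * l)) <= expR (- (q * l)) := expR_ge1Dx _.
rewrite expRN -/y in h2.
have h2' : y - 1 <= q * l * y.
  have : (1 - q * l) * y <= y^-1 * y by rewrite ler_pM2r.
  rewrite mulVf ?gt_eqF //; nra.
have h4 : E * (y - 1) <= E * (q * l * y) by rewrite ler_pM2l.
have h5 : E * (q * l * y) <= 0.
  apply: mulr_ge0_le0; first exact: ltW.
  apply: mulr_le0_ge0; last exact: ltW.
  apply: mulr_le0_ge0; exact: ltW.
nra.
Qed.
Theorem theorem4 (R : realType) (sigma2 : R) (hsigma : 0 < sigma2) :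
  exists C1 C2 C3 C4 : R, [/\ 0 < C1, 0 < C2, 0 < C3 & 0 < C4] /\
  forall (dS : measure_display) (S : measurableType dS)
         (dO : measure_display) (Omega : measurableType dO)
         (P : probability Omega R) (n : nat)
         (XS : 'I_n -> Omega -> S) (X : Omega -> S)
         (F : set (S -> R)) (phi : R -> R) (alpha : R)
         (muhat : (S -> R) -> Omega -> R)
         (fhat : Omega -> (S -> R)) (fstar : S -> R)
         (eps C M p : R),
    let m := fun f : S -> R => fine ('E_P[f \o X])%E in
    let Xc := [set (fun w => m f - muhat f w) | f in F] in
    let a := minr (n%:R ^+ 2 * eps / C2) (n%:R / 4) in
    (* sample *)
    (0 < n)%N ->
    measurable_fun setT X -> (forall i, measurable_fun setT (XS i)) ->
    mutually_independent P
      (fun o : option 'I_n => match o with None => X | Some i => XS i end) ->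
    (forall i, same_distribution P (XS i) X) ->
    (* the class F *)
    (forall f, F f -> measurable_fun setT f) ->
    (forall f, F f -> (f \o X) \in Lfun P 2%:E) ->
    (forall f, F f -> ('V_P[f \o X] <= sigma2%:E)%E) ->
    (* Catoni's estimator *)
    {homo phi : x y / x <= y} -> (forall x, derivable phi x 1) ->
    (forall x, - ln (1 - x + x ^+ 2 / 2) <= phi x <= ln (1 + x + x ^+ 2 / 2)) ->
    0 < alpha ->
    (forall f w, F f ->
       (n%:R * alpha)^-1 * \sum_(i < n) phi (alpha * (f (XS i w) - muhat f w)) = 0) ->
    (* standing assumption *)
    (forall f (x : R), F f -> 0 < x ->
       (outerP P [set w | (x <= `|m f - muhat f w|)%R]
        <= (2 * expR (- (n%:R * x ^+ 2) / (2 * (sigma2 + x ^+ 2))))%:E)%E) ->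
    (* empirical minimiser and population minimiser *)
    (forall w, F (fhat w) /\ forall f, F f -> muhat (fhat w) w <= muhat f w) ->
    F fstar -> (forall f, F f -> m fstar <= m f) ->
    (* epsilon *)
    0 < eps < 1 ->
    (* (i) exponential class *)
    0 < C -> 0 < M -> 0 < p -> p != 2 ->
    (forall delta : R, 0 < delta -> delta <= n%:R ->
       (bracketing_number P Xc delta <= (C * expR (M * powR delta (- p)))%:E)%E) ->
    (* (ii) *)
    powR n%:R (3 / 2) * eps ^+ 2 / C1 >=
      maxr (2 * Num.sqrt M / (2 - p) * (powR n%:R (1 - p / 2) - powR a (1 - p / 2))
            + (if 1 < C then Num.sqrt (ln C) * (n%:R - a) else 0))
           (Num.sqrt n%:R) ->
    (outerP P [set w | (n%:R ^+ 2 * eps <= m (fhat w) - m fstar)%R]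
      <= (C3 * expR (- (n%:R * eps ^+ 2) / C4))%:E)%E.
Proof.
set K := 2 + 64 / (ln (2:R)) ^+ 2.
have l20 : 0 < ln (2:R) by apply: ln_gt0; lra.
have K0 : 0 < K by rewrite /K; apply: addr_gt0; [lra| apply: divr_gt0; [lra| exact: exprn_gt0]].
have s0 : 0 < sigma2 + 1 by lra.
exists (64 * (sigma2 + 1) * K + 1), 8, 4, (64 * (sigma2 + 1)).
split.
  split; [| lra | lra | lra].
  by apply: addr_gt0 => //; apply: mulr_gt0 => //; apply: mulr_gt0.
move=> dS S dO Omega P n XS X F phi alpha muhat fhat fstar eps C M p m Xc a
  n0 mX mXS indep sd mF L2 var phimon phider phib alpha0 cat stand hfhat Ffstar
  hstar heps C0 M0 p0 p2 hbr hii.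
set C1 := 64 * (sigma2 + 1) * K + 1 in hii *.
have C1ge : 64 * (sigma2 + 1) * K <= C1 ^+ 2.
  have : 0 <= 64 * (sigma2 + 1) * K by apply: mulr_ge0; [apply: mulr_ge0|]; lra.
  rewrite /C1; nra.
have C10 : 0 < C1 by rewrite /C1; apply: addr_gt0 => //; apply: mulr_gt0 => //; apply: mulr_gt0.
have nR : 1 <= n%:R :> R by rewrite ler1n.
case/andP: heps => e0 e1.
have n2 : 1 <= n%:R ^+ 2 :> R by nra.
have a0 : 0 < a.
  rewrite /a lt_min; apply/andP; split; nra.
have a1 : a <= n%:R ^+ 2 * eps / 8 by rewrite /a ge_min lexx.
have a2 : a <= n%:R / 4 by rewrite /a ge_min lexx orbT.
have a3 : n%:R * eps <= 8 * a.
  have : n%:R * eps / 8 <= a by rewrite /a le_min; apply/andP; split; nra.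
  lra.
set d := 2 * a.
have d0 : 0 < d by rewrite /d; lra.
have dn : d <= n%:R by rewrite /d; lra.
set t := n%:R ^+ 2 * eps / 2.
set x := t - d.
have xe : eps / 4 <= x by rewrite /x /t /d; nra.
have x0 : 0 < x by lra.
have xt : x <= t by rewrite /x; lra.
have hb := hbr d d0 dn.
have Cp : 0 < C * expR (M * d `^ (- p)) by apply: mulr_gt0 => //; exact: expR_gt0.
have : (bracketing_number P Xc d < (2 * (C * expR (M * d `^ (- p))))%:E)%E.
  by apply: (le_lt_trans hb); rewrite lte_fin; lra.
case/ereal_inf_lt => _ [k hk <-]; rewrite lte_fin => kle.
case: hk => Lb [Ub [hLU hcov]].
set Z := expR (- (n%:R * x ^+ 2) / (2 * (sigma2 + x ^+ 2))).
have hsub : [set w | (n%:R ^+ 2 * eps <= m (fhat w) - m fstar)%R] `<=`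
  [set w | exists j, (j < k)%N /\ ([set w | (x <= `|Lb j w|)%R] `|`
                                     [set w | (d < `|Lb j w - Ub j w|)%R]) w].
  move=> w /= hw.
  have [Ff1 hmin] := hfhat w.
  have hm := hmin fstar Ffstar.
  have [f [Ff hf]] : exists f, F f /\ t <= `|m f - muhat f w|.
    case: (lerP t (m (fhat w) - muhat (fhat w) w)) => h1.
      by exists (fhat w); split => //; apply: le_trans h1 (ler_norm _).
    exists fstar; split => //; rewrite -normrN; apply: le_trans _ (ler_norm _).
    rewrite /t in h1 *; lra.
  have [j [jk hj]] : exists j, (j < k)%N /\ forall w, (Lb j w <= m f - muhat f w <= Ub j w).
    by apply: hcov; exists f.
  exists j; split => //.
  move: (hj w) => /andP[hL hU].
  case: (lerP (`|Lb j w - Ub j w|) d) => hd; [left|right] => //=.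
  move: hd; rewrite ler_norml => /andP[hd1 hd2].
  move: hf; rewrite ler_normr => /orP[hf|hf]; rewrite ler_normr; apply/orP; [left|right]; rewrite /x; lra.
have hpr : (outerP P [set w | exists j, (j < k)%N /\ ([set w | (x <= `|Lb j w|)%R] `|`
                                     [set w | (d < `|Lb j w - Ub j w|)%R]) w]
   <= (k%:R * (2 * Z + 0))%:E)%E.
  apply: outerP_big => j jk; apply: outerP_U.
    case: (hLU j jk) => XL XU hd.
    case: XL => f Ff eL; rewrite -eL.
    exact: stand f x Ff x0.
  case: (hLU j jk) => XL XU hd.
  exact: outerP_null hd.
have H1 := outerP_sub P hsub.
apply: (le_trans H1).
apply: (le_trans hpr); rewrite lee_fin addr0.
clear hsub hpr H1 hLU hcov hb hbr stand cat hfhat indep sd mF L2 var phimon phider phib.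
clearbody x t.
set W := M * d `^ (- p).
have Z0 : 0 <= Z by exact: ltW (expR_gt0 _).
set sg := sigma2 + 1.
set ne := n%:R * eps ^+ 2.
have ne0 : 0 < ne by rewrite /ne; apply: mulr_gt0; [lra| exact: exprn_gt0].
have e21 : eps ^+ 2 <= 1.
  have := ler_pM (ltW e0) (ltW e0) (ltW e1) (ltW e1); rewrite mulr1 expr2; lra.
have hZ : Z <= expR (- ne / (32 * sg)).
  rewrite /Z ler_expR !mulNr lerN2; apply: div_le; first by rewrite /sg; lra.
    by apply: mulr_gt0; [lra | apply: addr_gt0 => //; exact: exprn_gt0].
  rewrite /ne /sg.
  have hx2 : eps ^+ 2 <= 16 * x ^+ 2.
    have hh1 : 0 <= x - eps / 4 by rewrite subr_ge0.
    have hh2 : 0 <= x + eps / 4 by apply: addr_ge0; [exact: ltW| apply: divr_ge0; [exact: ltW|lra]].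
    have hh := mulr_ge0 hh1 hh2.
    rewrite !expr2; lra.
  have hx3 : eps ^+ 2 * x ^+ 2 <= x ^+ 2.
    by have := ler_wpM2r (sqr_ge0 x) e21; rewrite mul1r.
  have hq : eps ^+ 2 * (sigma2 + x ^+ 2) <= 16 * x ^+ 2 * (sigma2 + 1).
    have := ler_wpM2r (ltW hsigma) hx2.
    have := sqr_ge0 x.
    lra.
  have hq2 := ler_wpM2l (ler0n _ n) hq.
  lra.
move: hii; rewrite ge_max => /andP[hT _].
set q := 1 - p / 2 in hT.
have q1 : q < 1 by rewrite /q; lra.
have qn0 : q != 0.
  apply/negP => /eqP hq; move/negP: p2; apply; apply/eqP; rewrite /q in hq; lra.
have hk := key_pow a0 dn q1 qn0.
set h := (2 * a) `^ (q - 1) in hk.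
have h0 : 0 <= h := powR_ge0 _ _.
set sM := Num.sqrt M in hT.
have sM0 : 0 <= sM := sqrtr_ge0 _.
have sM2 : sM ^+ 2 = M by rewrite sqr_sqrtr // ltW.
have eT1 : 2 * sM / (2 - p) * (n%:R `^ q - a `^ q) = sM * ((n%:R `^ q - a `^ q) / q).
  have p2' : 2 - p != 0 by apply/negP => /eqP hq; move/negP: p2; apply; apply/eqP; lra.
  by rewrite /q; field.
rewrite eT1 in hT.
have T1ge : sM * (ln 2 * a * h) <= sM * ((n%:R `^ q - a `^ q) / q) by rewrite ler_wpM2l.
have X0 : 0 <= ln 2 * a * h by apply: mulr_ge0 => //; apply: mulr_ge0; lra.
set T2 := (if 1 < C then _ else _) in hT.
have T2ge : 0 <= T2 by rewrite /T2; case: ifP => // _; apply: mulr_ge0; [exact: sqrtr_ge0|lra].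
set sn := Num.sqrt (n%:R : R).
have sn0 : 0 <= sn := sqrtr_ge0 _.
have sn2 : sn ^+ 2 = n%:R by rewrite sqr_sqrtr // ler0n.
have e32 : n%:R `^ (3 / 2) = n%:R * sn :> R.
  have -> : (3 / 2 : R) = 1 + 2^-1 by field.
  rewrite powRD ?powRr1 ?powR12_sqrt ?ler0n //.
  by apply/implyP => _; rewrite gt_eqF //; lra.
rewrite e32 in hT.
have hBC : forall y, 0 <= y -> y <= n%:R * sn * eps ^+ 2 / C1 -> y * C1 <= n%:R * sn * eps ^+ 2.
  by move=> y _ hy; rewrite -ler_pdivlMr.
have hW : W <= (K - 2) * ne / C1 ^+ 2.
  have hX : sM * (ln 2 * a * h) * C1 <= n%:R * sn * eps ^+ 2.
    apply: hBC; first exact: mulr_ge0.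
    lra.
  have hX2 : (sM * (ln 2 * a * h) * C1) ^+ 2 <= (n%:R * sn * eps ^+ 2) ^+ 2.
    have hX0 : 0 <= sM * (ln 2 * a * h) * C1 by apply: mulr_ge0; [exact: mulr_ge0 | exact: ltW].
    have hY0 : 0 <= n%:R * sn * eps ^+ 2.
      by apply: mulr_ge0; [apply: mulr_ge0; [exact: ler0n|exact: sn0]| exact: sqr_ge0].
    by rewrite ler_pXn2r ?nnegrE.
  have ep : (n%:R * sn * eps ^+ 2) ^+ 2 = n%:R * (n%:R * eps) ^+ 2 * eps ^+ 2.
    by rewrite !exprMn sn2; ring.
  have a64 : (n%:R * eps) ^+ 2 <= 64 * a ^+ 2.
    have hne : 0 <= n%:R * eps by apply: mulr_ge0; lra.
    have := ler_pM hne hne a3 a3; rewrite !expr2; lra.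
  have ed : d `^ (- p) = h * h.
    have -> : - p = (q - 1) + (q - 1) by rewrite /q; field.
    by rewrite /h -powRD //; apply/implyP => _; rewrite gt_eqF.
  rewrite /W ed /K.
  have l2s : 0 < ln (2:R) ^+ 2 by exact: exprn_gt0.
  have hF : M * (h * h) * (ln 2 ^+ 2 * C1 ^+ 2) <= 64 * ne.
    have a20 : 0 < a ^+ 2 by exact: exprn_gt0.
    rewrite -(ler_pM2r a20).
    have -> : M * (h * h) * (ln 2 ^+ 2 * C1 ^+ 2) * a ^+ 2 = (sM * (ln 2 * a * h) * C1) ^+ 2.
      by rewrite -sM2; ring.
    apply: (le_trans hX2); rewrite ep /ne.
    have hh : 0 <= n%:R * eps ^+ 2 by apply: mulr_ge0; [lra| exact: sqr_ge0].
    have := ler_wpM2l hh a64.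
    have -> : n%:R * (n%:R * eps) ^+ 2 * eps ^+ 2 = n%:R * eps ^+ 2 * (n%:R * eps) ^+ 2 by ring.
    lra.
  have -> : (2 + 64 / ln 2 ^+ 2 - 2) * ne / C1 ^+ 2 = 64 * ne / (ln 2 ^+ 2 * C1 ^+ 2).
    by field; rewrite !gt_eqF.
  by rewrite ler_pdivlMr //; apply: mulr_gt0 => //; exact: exprn_gt0.
have hA : C <= expR (2 * ne / C1 ^+ 2).
  case: (lerP C 1) => hC.
    apply: (le_trans hC); apply: le_trans (expR_ge1Dx _); rewrite lerDl.
    by apply: divr_ge0; [lra| exact: sqr_ge0].
  rewrite /T2 hC in T2ge hT.
  set s := Num.sqrt (ln C) in T2ge hT.
  have sq0 : 0 <= s := sqrtr_ge0 _.
  have lC0 : 0 <= ln C by apply: ln_ge0; lra.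
  have s2 : s ^+ 2 = ln C by rewrite sqr_sqrtr.
  have hX : s * (n%:R - a) * C1 <= n%:R * sn * eps ^+ 2.
    apply: hBC; first exact: T2ge.
    have : 0 <= sM * (ln 2 * a * h) by exact: mulr_ge0.
    lra.
  have hs : s * C1 * 3 <= 4 * sn * eps ^+ 2.
    have n0' : 0 < n%:R :> R by lra.
    rewrite -(ler_pM2r n0').
    have hsc : 0 <= s * C1 by apply: mulr_ge0 => //; lra.
    have hna : 3 * n%:R / 4 <= n%:R - a by lra.
    have := ler_wpM2l hsc hna.
    lra.
  have hs2 : (s * C1 * 3) ^+ 2 <= (4 * sn * eps ^+ 2) ^+ 2.
    by rewrite ler_pXn2r // ?nnegrE //; apply: mulr_ge0 => //; apply: mulr_ge0 => //; lra.
  have hlC : ln C * C1 ^+ 2 <= 2 * ne.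
    have E1 : (s * C1 * 3) ^+ 2 = ln C * C1 ^+ 2 * 9 by rewrite -s2; ring.
    have E2 : (4 * sn * eps ^+ 2) ^+ 2 = 16 * n%:R * (eps ^+ 2 * eps ^+ 2) by rewrite -sn2; ring.
    rewrite E1 E2 in hs2.
    have e4 : eps ^+ 2 * eps ^+ 2 <= eps ^+ 2.
      by have := ler_wpM2l (sqr_ge0 eps) e21; rewrite mulr1.
    have := ler_wpM2l (ler0n _ n) e4.
    have hn2 : 0 <= n%:R * eps ^+ 2 := ltW ne0.
    rewrite /ne; lra.
  rewrite -[X in X <= _]lnK ?posrE // ler_expR ler_pdivlMr //; exact: exprn_gt0.
have hfin : C * expR W * Z <= expR (- ne / (64 * sg)) := final_comb ne0 s0 C10 C0 Z0 C1ge hA hW hZ.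
have hk2 : k%:R * (2 * Z) <= 2 * (C * expR W) * (2 * Z).
  by rewrite ler_wpM2r //; [lra| exact: ltW].
apply: (le_trans hk2); lra.
Qed.
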